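(* The graph $C_4+3P_1$ is of class $\mathcal C_2$.
   Context: All graphs are finite, simple and undirected. $C_n$ and $P_n$ denote the cycle and the path on $n$ vertices; $kG$ denotes the disjoint union of $k$ copies of $G$ (so $3P_1$ is the edgeless graph on 3 vertices). The join $G+H$ is obtained from vertex-disjoint copies of $G$ and $H$ by adding all edges between $V(G)$ and $V(H)$. A drawing is 1-planar if each edge is crossed at most once (adjacent edges never cross, no edge crosses itself); a graph is 1-planar if it has such a drawing. For a 1-planar drawing $D$, $D^\times$ is the plane graph obtained by turning each crossing into a new degree-4 vertex (a false vertex); $N_{D^\times}(c)$ is the neighbour set of a false vertex $c$. A 1-planar graph is of class $\mathcal C_0$ if it has a 1-planar drawing with $|N_{D^\times}(c_1)\cap N_{D^\times}(c_2)|=0$ for all distinct false vertices; for $i\in\{1,2\}$ it is of class $\mathcal C_i$ if it is not of class $\mathcal C_k$ for any $k<i$ and it has a 1-planar drawing with $|N_{D^\times}(c_1)\cap N_{D^\times}(c_2)|\le i$ for all distinct false vertices $c_1,c_2$. *)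

(* Defs.v *)
(* Combinatorial model of 1-planar drawings via the
   planarization D^x and a genus-0 rotation system (combinatorial map). *)
From mathcomp Require Import all_boot all_fingroup.
Set Implicit Arguments. Unset Strict Implicit. Unset Printing Implicit Defensive.

(** * Graphs: a simple graph is a symmetric irreflexive [rel] on a finType. *)

Definition cycle_rel (n : nat) : rel 'I_n :=
  fun i j => (i != j) && ((i.+1 %% n == j) || (j.+1 %% n == i)).

Arguments cycle_rel n : clear implicits.

Definition edgeless_rel (k : nat) : rel 'I_k := fun _ _ => false.

Arguments edgeless_rel k : clear implicits.

(* Join G + H on the disjoint union of the vertex sets. *)
Definition join_rel (T1 T2 : finType) (e1 : rel T1) (e2 : rel T2)
  : rel (T1 + T2)%type :=
  fun x y => match x, y with
  | inl u, inl v => e1 u v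
  | inr u, inr v => e2 u v
  | _, _ => true
  end.

Definition swap_pair (W : Type) (p : W * W) : W * W := (p.2, p.1).
Lemma swap_pairK (W : Type) : involutive (@swap_pair W).
Proof. by case. Qed.
Definition swap_perm (W : finType) : {perm (W * W)} :=
  perm (inv_inj (@swap_pairK W)).

Section Embedding.
Variables (W : finType) (h : rel W).

Definition dart (d : W * W) : bool := h d.1 d.2.

(* s : the rotation permutation on darts: s (x,y) = (x,y') with y' the
   successor of y in the cyclic order around x; s fixes non-darts. *)
Definition rotation_system (s : {perm (W * W)}) : Prop :=
  [/\ forall d, ~~ dart d -> s d = d,
      forall d, dart d -> (s d).1 = d.1
    & forall x y z, h x y -> h x z -> (x, z) \in porbit s (x, y)].

(* face-tracing permutation: (x,y) |-> s (y,x) *)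
Definition face_perm (s : {perm (W * W)}) : {perm (W * W)} :=
  (swap_perm W * s)%g.

Definition nfaces (s : {perm (W * W)}) : nat :=
  #|[set porbit (face_perm s) d | d in [pred d | dart d]]|.

Definition ndarts : nat := #|[pred d | dart d]|.   (* = 2 |E| *)

Definition ncomps : nat := #|[set [set y | connect h x y] | x : W]|.

Definition nedge_comps : nat :=
  #|[set [set y | connect h x y] | x in [pred x | [exists y, h x y]]]|.

(* Euler's formula V - E + F = c + c' (c components, c' of them with an
   edge), i.e. every non-trivial component has genus 0. *)
Definition plane_rotation (s : {perm (W * W)}) : Prop :=
  rotation_system s /\
  2 * (#|W| + nfaces s) = 2 * (ncomps + nedge_comps) + ndarts.

End Embedding.

Section Drawing.
Variables (T : finType) (e : rel T) (k : nat).
(* crossing i : edge (a,b) crosses edge (c,d), where cr i = ((a,b),(c,d)) *)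
Variable cr : 'I_k -> (T * T) * (T * T).

Definition on_edge (p : T * T) (u v : T) : bool := ((u, v) == p) || ((v, u) == p).
Definition crossed_at (i : 'I_k) (u v : T) : bool :=
  on_edge (cr i).1 u v || on_edge (cr i).2 u v.
Definition cr_verts (i : 'I_k) : {set T} :=
  [set (cr i).1.1; (cr i).1.2; (cr i).2.1; (cr i).2.2].

(* D^x : original vertices (inl) plus one false vertex (inr i) per crossing *)
Definition planarization : rel (T + 'I_k)%type :=
  fun x y => match x, y with
  | inl u, inl v => e u v && ~~ [exists i, crossed_at i u v]
  | inl u, inr i => u \in cr_verts i
  | inr i, inl u => u \in cr_verts i
  | inr _, inr _ => false
  end.

Definition valid_crossings : Prop :=
  (forall i, let: ((a, b), (c, d)) := cr i in
     [&& e a b, e c d, a != c, a != d, b != c & b != d])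
  /\ (forall i j u v, e u v -> crossed_at i u v -> crossed_at j u v -> i = j).

Definition one_planar_drawing (s : {perm ((T + 'I_k) * (T + 'I_k))}) : Prop :=
  [/\ valid_crossings,
      plane_rotation planarization s
    & forall i, let: ((a, b), (c, d)) := cr i in
        [/\ s (inr i, inl a) = (inr i, inl c),
            s (inr i, inl c) = (inr i, inl b),
            s (inr i, inl b) = (inr i, inl d)
          & s (inr i, inl d) = (inr i, inl a)]].

Definition false_nbhd (i : 'I_k) : {set (T + 'I_k)} :=
  [set y | planarization (inr i) y].

End Drawing.

Definition has_drawing_bound (T : finType) (e : rel T) (m : nat) : Prop :=
  exists (k : nat) (cr : 'I_k -> (T * T) * (T * T))
         (s : {perm ((T + 'I_k) * (T + 'I_k))}),
    one_planar_drawing e cr s /\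
    forall i j : 'I_k, i != j -> #|false_nbhd e cr i :&: false_nbhd e cr j| <= m.

Definition class_C0 (T : finType) (e : rel T) : Prop := has_drawing_bound e 0.
Definition class_C1 (T : finType) (e : rel T) : Prop :=
  ~ class_C0 e /\ has_drawing_bound e 1.
Definition class_C2 (T : finType) (e : rel T) : Prop :=
  ~ class_C0 e /\ ~ class_C1 e /\ has_drawing_bound e 2.

(* Main.v *)
Require Import Defs.
From mathcomp Require Import all_boot all_fingroup zify.
Set Implicit Arguments. Unset Strict Implicit. Unset Printing Implicit Defensive.

Module Low.
Section Lower.
Variables (T : finType) (e : rel T) (k : nat) (cr : 'I_k -> (T * T) * (T * T)).
Variable s : {perm ((T + 'I_k) * (T + 'I_k))}.
Hypothesis esym : forall u v, e u v = e v u.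
Hypothesis eirr : forall u, e u u = false.
Hypothesis noK4 : forall a b c d, e a b -> e c d -> e c a -> e b c -> e d b -> e a d -> False.
Hypothesis deg2 : forall u, 2 <= #|[set w | e u w]|.
Hypothesis Hd : one_planar_drawing e cr s.

Local Notation W := (T + 'I_k)%type.
Local Notation h := (planarization e cr).
Local Notation phi := (face_perm s).

Lemma valid1 i : let: ((a, b), (c, d)) := cr i in
     [&& e a b, e c d, a != c, a != d, b != c & b != d].
Proof. by case: Hd => [[H _] _ _]; apply: H. Qed.

Lemma valid_rot i : let: ((a, b), (c, d)) := cr i in
        [/\ s (inr i, inl a) = (inr i, inl c),
            s (inr i, inl c) = (inr i, inl b),
            s (inr i, inl b) = (inr i, inl d)
          & s (inr i, inl d) = (inr i, inl a)].
Proof. by case: Hd => [_ _ H]; apply: H. Qed.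

Lemma rotsys : rotation_system h s.
Proof. by case: Hd => [_ [H _] _]. Qed.

Lemma crossed_sym i u v : crossed_at cr i u v = crossed_at cr i v u.
Proof. by rewrite /crossed_at /on_edge [((v, u) == _) || _]orbC [((v, u) == (cr i).2) || _]orbC. Qed.

Lemma hsym x y : h x y = h y x.
Proof.
case: x => [u|i]; case: y => [v|j] //=.
by rewrite esym; congr (_ && ~~ _); apply: eq_existsb => i; rewrite crossed_sym.
Qed.

Lemma hirr x : h x x = false.
Proof. by case: x => [u|i] //=; rewrite eirr. Qed.

Lemma s_fix d : ~~ dart h d -> s d = d.
Proof. by case: rotsys => H _ _; apply: H. Qed.

Lemma s1 d : dart h d -> (s d).1 = d.1.
Proof. by case: rotsys => _ H _; apply: H. Qed.

Lemma s_dart d : dart h d -> dart h (s d).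
Proof.
move=> hd; apply/negPn/negP => nd.
have := s_fix nd; move/perm_inj => E; by rewrite E hd in nd.
Qed.

Lemma phiE d : phi d = s (d.2, d.1).
Proof. by rewrite /face_perm permM /swap_perm permE. Qed.

Lemma swap_dart d : dart h d -> dart h (d.2, d.1).
Proof. by rewrite /dart /= hsym. Qed.

Lemma phi_dart d : dart h d -> dart h (phi d).
Proof. by move=> hd; rewrite phiE; apply/s_dart/swap_dart. Qed.

Lemma phi1 d : dart h d -> (phi d).1 = d.2.
Proof. by move=> hd; rewrite phiE s1 //; apply: swap_dart. Qed.


Definition nu (u w : T) : W :=
  if [pick i | crossed_at cr i u w] is Some i then inr i else inl w.

Lemma crossed_in i u w : crossed_at cr i u w -> u \in cr_verts cr i.
Proof.
rewrite /crossed_at /on_edge /cr_verts; case: (cr i) => [[a b] [c d]] /=.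
rewrite !xpair_eqE !inE -!orbA.
by case/or4P => /andP[/eqP E1 /eqP E2]; subst; rewrite eqxx ?orbT.
Qed.

Lemma crossed_same i u w1 w2 :
  crossed_at cr i u w1 -> crossed_at cr i u w2 -> w1 = w2.
Proof.
have := valid1 i; rewrite /crossed_at /on_edge.
case: (cr i) => [[a b] [c d]] /= V.
rewrite !xpair_eqE -!orbA.
case/or4P => /andP[/eqP E1 /eqP E2]; case/or4P => /andP[/eqP E3 /eqP E4];
  subst; try done; move: V; by rewrite ?eirr ?eqxx ?andbF.
Qed.

Lemma nu_adj u w : e u w -> h (inl u) (nu u w).
Proof.
move=> euw; rewrite /nu; case: pickP => [i Hi | Hn] /=.
  exact: crossed_in Hi.
rewrite euw /=; apply/existsP => -[i]; by rewrite Hn.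
Qed.

Lemma nu_inj u w1 w2 : nu u w1 = nu u w2 -> w1 = w2.
Proof.
rewrite /nu; case: pickP => [i1 H1|N1]; case: pickP => [i2 H2|N2] //=; last by case.
by case=> E; subst; apply: crossed_same H1 H2.
Qed.

Lemma deg_le u : #|[set w | e u w]| <= #|[set y | h (inl u) y]|.
Proof.
rewrite -(card_in_imset (f := nu u)); last by move=> ? ? _ _; apply: nu_inj.
apply: subset_leq_card; apply/subsetP => _ /imsetP[w Hw ->].
by rewrite inE; apply: nu_adj; rewrite inE in Hw.
Qed.


Lemma iter_fix (f : W * W -> W * W) x n : f x = x -> iter n f x = x.
Proof. by move=> fx; elim: n => //= n ->. Qed.

Lemma nofix d : dart h d -> s d != d.
Proof.
case: d => [[u|i] y] hd.
  have [z /andP[hz nzy]] : exists z, h (inl u) z && (z != y).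
    case: (boolP [exists z, h (inl u) z && (z != y)]) => [/existsP //|/existsPn N].
    exfalso.
    have : [set z | h (inl u) z] \subset [set y].
      apply/subsetP => z; rewrite !inE => hz; move: (N z); rewrite hz /=.
      by move/negbNE.
    move/subset_leq_card; rewrite cards1 => le1.
    by have := leq_trans (deg2 u) (leq_trans (deg_le u) le1).
  apply/eqP => E.
  case: rotsys => _ _ R3.
  have := R3 _ _ _ hd hz; case/porbitP => n; rewrite permX iter_fix //.
  by case=> E'; rewrite E' eqxx in nzy.
case: y hd => [v|j] //= hv.
move: hv; rewrite /dart /= /cr_verts; have := valid1 i; have := valid_rot i.
case: (cr i) => [[a b] [c d]] /= [R1 R2 R3 R4] V.
rewrite !inE -!orbA; case/or4P => /eqP->;
  rewrite ?R1 ?R2 ?R3 ?R4; apply/eqP; case=> E; move: V; rewrite E ?eqxx ?andbF //.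
Qed.

Lemma phi_nofix d : dart h d -> phi d != d.
Proof.
move=> hd; apply/eqP => E; have := phi1 hd; rewrite E => E1.
by move: hd; rewrite /dart E1 hirr.
Qed.

Lemma phi2_nofix d : dart h d -> phi (phi d) != d.
Proof.
move=> hd; apply/eqP => E.
have hd' := phi_dart hd.
have := phi1 hd'; rewrite E => E1.
have E2 := phi1 hd.
have F : phi d = (d.2, d.1) by move: E1 E2; case: (phi d) => a b /= -> ->.
have := nofix (swap_dart hd); by rewrite -phiE F eqxx.
Qed.

Lemma face_closed d x : x \in porbit phi d -> phi x \in porbit phi d.
Proof.
move=> H; have E : porbit phi x = porbit phi d by apply/eqP; rewrite eq_porbit_mem.
by have := mem_porbit phi 1 x; rewrite expg1 E.
Qed.

Lemma face_dart d x : dart h d -> x \in porbit phi d -> dart h x.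
Proof.
move=> hd /porbitP[n ->]; rewrite permX; elim: n => //= n IH.
exact: phi_dart.
Qed.


Definition bc i : T := let: ((a, b), (c, d)) := cr i in
  if ~~ e c a then a else if ~~ e b c then c else if ~~ e d b then b else d.
Definition nbc i : T := let: ((a, b), (c, d)) := cr i in
  if ~~ e c a then c else if ~~ e b c then b else if ~~ e d b then d else a.

Lemma bc_props i : [/\ s (inr i, inl (bc i)) = (inr i, inl (nbc i)),
   e (nbc i) (bc i) = false & bc i \in cr_verts cr i].
Proof.
rewrite /bc /nbc /cr_verts; have := valid1 i; have := valid_rot i.
case: (cr i) => [[a b] [c d]] /= [R1 R2 R3 R4] /andP[Hab /andP[Hcd _]].
case Eca: (e c a) => /=; last by rewrite !inE eqxx.
case Ebc: (e b c) => /=; last by rewrite !inE eqxx ?orbT.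
case Edb: (e d b) => /=; last by rewrite !inE eqxx ?orbT.
split => //; last by rewrite !inE eqxx ?orbT.
by apply/negbTE/negP => Had; apply: (noK4 Hab Hcd Eca Ebc Edb Had).
Qed.

Definition Cset : {set W * W} := [set ((inl (bc i) : W), (inr i : W)) | i : 'I_k].

Lemma card_C : #|Cset| = k.
Proof. by rewrite card_imset ?card_ord // => i j [_]. Qed.

Lemma C_form d : d \in Cset -> exists i, d = (inl (bc i), inr i).
Proof. by case/imsetP => i _ ->; exists i. Qed.

Lemma C_dart d : d \in Cset -> dart h d.
Proof. by case/C_form => i ->; rewrite /dart /=; case: (bc_props i). Qed.

Lemma phi_notC d : d \in Cset -> phi d \notin Cset.
Proof.
move=> dC; apply/negP => /C_form[j Ej].
have := phi1 (C_dart dC); rewrite Ej; case/C_form: dC => i -> //.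
Qed.

Lemma card2 (X : finType) (x y : X) : x != y -> #|[set x; y]| = 2.
Proof. by move=> nxy; rewrite cardsU1 cards1 inE (negbTE nxy). Qed.

Lemma seq_le_card (X : finType) (sq : seq X) (B : {set X}) :
  uniq sq -> {subset sq <= B} -> size sq <= #|B|.
Proof.
move=> u sub; rewrite -(card_uniqP u); apply: subset_leq_card.
by apply/subsetP => x; apply: sub.
Qed.


Hypothesis Hb : forall i j : 'I_k, i != j ->
  #|false_nbhd e cr i :&: false_nbhd e cr j| <= 1.

Lemma pair_eta (A B : Type) (p : A * B) a b : p.1 = a -> p.2 = b -> p = (a, b).
Proof. by case: p => ? ? /= -> ->. Qed.

Lemma face_ineq d : dart h d -> #|porbit phi d :&: Cset| + 3 <= #|porbit phi d|.
Proof.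
move=> hd.
set B := porbit phi d; set D0 := B :&: Cset.
have inB x : x \in B -> phi x \in B by apply: face_closed.
have dB x : x \in B -> dart h x by apply: face_dart.
have DB x : x \in D0 -> x \in B by case/setIP.
have DC x : x \in D0 -> x \in Cset by case/setIP.
have disj : D0 :&: phi @: D0 = set0.
  apply/setP => y; rewrite !inE; apply/negP => /andP[/andP[_ yC] /imsetP[x xD Ey]].
  by have := phi_notC (DC _ xD); rewrite -Ey yC.
have L2 : 2 * #|D0| <= #|B|.
  have <- : #|D0 :|: phi @: D0| = 2 * #|D0|.
    by rewrite cardsU disj cards0 subn0 card_imset ?mul2n ?addnn //; apply: perm_inj.
  apply: subset_leq_card; apply/subsetP => y /setUP[/DB //|/imsetP[x xD ->]].
  by apply: inB; apply: DB.
have L3 : 3 <= #|B|.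
  have dd : d \in B by apply: porbit_id.
  apply: (seq_le_card (sq := [:: d; phi d; phi (phi d)])).
    rewrite /= !inE !negb_or eq_sym (phi_nofix hd) eq_sym (phi2_nofix hd) /=.
    by rewrite eq_sym (phi_nofix (phi_dart hd)).
  by move=> x; rewrite !inE => /or3P[] /eqP->; rewrite ?inB.
case: (ltnP #|D0| 1) => [g0|g1].
  by move: g0; rewrite ltnS leqn0 => /eqP->.
case: (ltnP #|D0| 3) => [g2|g3]; last by apply: leq_trans L2; rewrite mul2n -addnn leq_add2l.
have [d1 d1D] : exists d1, d1 \in D0 by apply/set0Pn; rewrite -card_gt0.
have hd1 := dB _ (DB _ d1D).
have hp1 := phi_dart hd1. have hp2 := phi_dart hp1.
have n01 := phi_nofix hd1. have n02 := phi2_nofix hd1.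
have n12 := phi_nofix hp1. have n13 := phi2_nofix hp1. have n23 := phi_nofix hp2.
have Bd1 : porbit phi d1 = B by apply/eqP; rewrite eq_porbit_mem; apply: DB.
case/C_form: (DC _ d1D) => i Ed1.
case: (ltnP #|D0| 2) => [g1e|g2e].
  have -> : #|D0| = 1 by apply/eqP; rewrite eqn_leq g1 andbT; exact: g1e.
  have n03 : phi (phi (phi d1)) != d1.
    apply/eqP => E.
    have E1 := phi1 hp1. have E2 := phi1 hp2. rewrite E in E2.
    have P1 : phi d1 = (inr i, inl (nbc i)) by rewrite phiE Ed1 /=; case: (bc_props i).
    have P2 : phi (phi d1) = (inl (nbc i), inl (bc i)).
      by apply: pair_eta; [rewrite E1 P1 | rewrite -E2 Ed1].
    by move: hp2; rewrite /dart P2 /=; case: (bc_props i) => _ ->.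
  have d1B : d1 \in B by apply: DB.
  apply: (seq_le_card (sq := [:: d1; phi d1; phi (phi d1); phi (phi (phi d1))])).
    rewrite /= !inE !negb_or ![d1 == _]eq_sym n01 n02 n03 /=.
    by rewrite ![phi d1 == _]eq_sym n12 n13 eq_sym n23.
  by move=> x; rewrite !inE => /or4P[] /eqP->; rewrite ?inB.
have gg : #|D0| = 2 by apply/eqP; rewrite eqn_leq g2e andbT -ltnS.
rewrite gg; rewrite leqNgt; apply/negP => lt5.
have EB : D0 :|: phi @: D0 = B.
  apply/eqP; rewrite eqEcard; apply/andP; split.
    apply/subsetP => y /setUP[/DB //|/imsetP[x xD ->]]; by apply: inB; apply: DB.
  rewrite cardsU disj cards0 subn0 card_imset ?gg; last by apply: perm_inj.
  by rewrite -ltnS.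
have step x : x \in D0 -> phi (phi x) \in D0.
  move=> xD; have : phi (phi x) \in B by apply/inB/inB/DB.
  rewrite -EB => /setUP[//|/imsetP[y yD /perm_inj Ey]].
  by have := phi_notC (DC _ xD); rewrite Ey (DC _ yD).
set d2 := phi (phi d1).
have d2D : d2 \in D0 by apply: step.
have hd2 := dB _ (DB _ d2D).
have E3 : phi (phi d2) = d1.
  apply/eqP/negPn/negP => ne.
  have : 3 <= #|D0|.
    apply: (seq_le_card (sq := [:: d1; d2; phi (phi d2)])); last first.
      by move=> x; rewrite !in_cons in_nil orbF => /or3P[] /eqP->; rewrite ?step.
    rewrite /= !inE !negb_or eq_sym n02 eq_sym ne /=.
    by rewrite eq_sym (phi2_nofix hd2).
  by rewrite gg.
case/C_form: (DC _ d2D) => j Ed2.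
have hq1 := phi_dart hd2.
have P1 : phi d1 = (inr i, inl (bc j)).
  apply: pair_eta; first by rewrite phi1 // Ed1.
  by rewrite -(phi1 hp1) -/d2 Ed2.
have Q1 : phi d2 = (inr j, inl (bc i)).
  apply: pair_eta; first by rewrite phi1 // Ed2.
  by rewrite -(phi1 hq1) E3 Ed1.
have vi : bc j \in cr_verts cr i by move: hp1; rewrite /dart P1.
have uj : bc i \in cr_verts cr j by move: hq1; rewrite /dart Q1.
have ui : bc i \in cr_verts cr i by case: (bc_props i).
have vj : bc j \in cr_verts cr j by case: (bc_props j).
have nij : i != j.
  apply/eqP => Eij; move: n02; rewrite -/d2 Ed2 Ed1 Eij eqxx //.
have nuv : inl (bc i) != inl (bc j) :> W.
  have := nofix (swap_dart (C_dart (DC _ d1D))); rewrite -phiE P1 Ed1 /=.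
  by apply: contra => /eqP->.
have := Hb nij.
have : 2 <= #|false_nbhd e cr i :&: false_nbhd e cr j|.
  apply: (seq_le_card (sq := [:: inl (bc i); inl (bc j)])).
    by rewrite /= inE andbT.
  by move=> x; rewrite !inE => /orP[] /eqP->; rewrite /= ?ui ?uj ?vi ?vj.
by move/leq_trans => H /H.
Qed.


Lemma faces_bound : 3 * nfaces h s + k <= ndarts h.
Proof.
set P := [set porbit phi d | d in [pred d | dart h d]].
have -> : nfaces h s = #|P| by [].
have trP : trivIset P.
  apply/trivIsetP => A B /imsetP[a _ ->] /imsetP[b _ ->] neq.
  rewrite -setI_eq0; apply/eqP/setP => x; rewrite !inE; apply/negP => /andP[xa xb].
  move: neq; rewrite eq_porbit_mem.
  have Eb : porbit phi x = porbit phi b by apply/eqP; rewrite eq_porbit_mem.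
  by rewrite -Eb porbit_sym xa.
have cov : cover P = [set d | dart h d].
  apply/setP => y; rewrite inE; apply/bigcupP/idP.
    by case => _ /imsetP[d hd ->]; apply: face_dart.
  by move=> hx; exists (porbit phi y); [apply: imset_f | apply: porbit_id].
have -> : ndarts h = \sum_(B in P) #|B| by rewrite (eqP trP) cov cardsE.
have sumC : k <= \sum_(B in P) #|B :&: Cset|.
  rewrite -{1}card_C -sum1_card.
  apply: (@leq_trans (\sum_(x in Cset) \sum_(B in P) (x \in B : nat))).
    apply: leq_sum => x xC.
    rewrite (bigD1 (porbit phi x)) /=; last by apply: imset_f; apply: C_dart.
    by rewrite porbit_id leq_addr.
  rewrite exchange_big; apply: leq_sum => B _.
  rewrite -sum1_card big_mkcond [X in _ <= X]big_mkcond /=.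
  by apply: leq_sum => x _; rewrite inE; case: (x \in B); case: (x \in Cset).
apply: (leq_trans (leq_add (leqnn _) sumC)).
rewrite mulnC -sum_nat_const -big_split /=.
apply: leq_sum => B /imsetP[d hd ->]; rewrite addnC.
exact: face_ineq.
Qed.


Lemma inlE (x y : T) : (inl x == inl y :> W) = (x == y).
Proof. by []. Qed.

Lemma false_deg i : 4 <= #|[set y | h (inr i) y]|.
Proof.
have := valid1 i; rewrite /cr_verts.
case E: (cr i) => [[a b] [c d]] /= V.
have [nac nad nbc' nbd] : [/\ a != c, a != d, b != c & b != d].
  by move: V => /andP[_ /andP[_ /and4P[]]].
have nab : a != b by apply/eqP => Eab; move: V; rewrite Eab eirr.
have ncd : c != d by apply/eqP => Ecd; move: V; rewrite Ecd eirr andbF.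
apply: (seq_le_card (sq := [:: inl a; inl b; inl c; inl d])).
  by rewrite /= !inE !inlE (negbTE nab) (negbTE nac) (negbTE nad) (negbTE nbc') (negbTE nbd) ncd.
by move=> x; rewrite !inE => /or4P[] /eqP->; rewrite /= /cr_verts E !inE eqxx ?orbT.
Qed.

Lemma darts_lb : \sum_u #|[set w | e u w]| + 4 * k <= ndarts h.
Proof.
have -> : ndarts h = \sum_x #|[set y | h x y]|.
  rewrite /ndarts -sum1_card.
  transitivity (\sum_x \sum_(y | h x y) 1).
    by rewrite pair_big_dep; apply: eq_bigl => -[x y].
  by apply: eq_bigr => x _; rewrite sum1dep_card.
rewrite big_sumType /=; apply: leq_add.
  by apply: leq_sum => u _; apply: deg_le.
apply: (@leq_trans (\sum_(i < k) 4)); first by rewrite sum_nat_const card_ord mulnC.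
by apply: leq_sum => i _; apply: false_deg.
Qed.

Variable t0 : T.

Lemma main_ineq : \sum_u #|[set w | e u w]| + 6 * k + 12 <= 6 * (#|T| + k).
Proof.
case: (Hd) => _ [_ Eul] _.
rewrite card_sum card_ord in Eul.
have c1 : 0 < ncomps h.
  rewrite /ncomps card_gt0; apply/set0Pn; exists [set y | connect h (inl t0) y]; apply/imsetP; by exists (inl t0).
have c2 : 0 < nedge_comps h.
  rewrite /nedge_comps card_gt0; apply/set0Pn; exists [set y | connect h (inl t0) y]; apply/imsetP; exists (inl t0) => //.
  rewrite inE; apply/existsP.
  have : 0 < #|[set y | h (inl t0) y]| by apply: leq_trans (deg_le t0); apply: leq_trans (deg2 t0).
  by rewrite card_gt0 => /set0Pn[y]; rewrite inE => hy; exists y.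
have F := faces_bound.
have D := darts_lb.
lia.
Qed.

End Lower.
End Low.

Definition T := ('I_4 + 'I_3)%type.
Definition e : rel T := join_rel (cycle_rel 4) (edgeless_rel 3).
Definition c0 : T := inl (@Ordinal 4 0 isT).
Definition c1 : T := inl (@Ordinal 4 1 isT).
Definition c2 : T := inl (@Ordinal 4 2 isT).
Definition c3 : T := inl (@Ordinal 4 3 isT).
Definition px : T := inr (@Ordinal 3 0 isT).
Definition py : T := inr (@Ordinal 3 1 isT).
Definition pz : T := inr (@Ordinal 3 2 isT).
Definition i0 : 'I_2 := @Ordinal 2 0 isT.
Definition i1 : 'I_2 := @Ordinal 2 1 isT.
Definition W := (T + 'I_2)%type.
Definition v (t : T) : W := inl t.
Definition A : W := inr i0.
Definition B : W := inr i1.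

Definition enumT : seq T := [:: c0; c1; c2; c3; px; py; pz].
Definition enumI : seq 'I_2 := [:: i0; i1].
Definition enumW : seq W := map inl enumT ++ map inr enumI.
Definition enumWW : seq (W * W) := [seq (x, y) | x <- enumW, y <- enumW].

Lemma memT (t : T) : t \in enumT.
Proof. by case: t => [[[|[|[|[|n]]]] Hn]|[[|[|[|n]]] Hn]]. Qed.
Lemma memI (i : 'I_2) : i \in enumI.
Proof. by case: i => [[|[|n]] Hn]. Qed.
Lemma memW (x : W) : x \in enumW.
Proof. by case: x => [t|i]; rewrite mem_cat; apply/orP; [left|right]; apply: map_f; [apply: memT|apply: memI]. Qed.
Lemma memWW (d : W * W) : d \in enumWW.
Proof. by case: d => x y; apply: allpairs_f; apply: memW. Qed.

Lemma card_count (X : finType) (sq : seq X) (p : pred X) :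
  uniq sq -> (forall x, x \in sq) -> #|[pred x | p x]| = count p sq.
Proof.
move=> u all_in; rewrite -size_filter -(card_uniqP (filter_uniq p u)).
by apply: eq_card => x; rewrite !inE mem_filter all_in andbT.
Qed.

Definition cr (i : 'I_2) : (T * T) * (T * T) :=
  if val i == 0 then ((c2, pz), (px, c1)) else ((px, c0), (c3, pz)).
Definition cr_list (i : 'I_2) : seq T :=
  let: ((a, b), (c, d)) := cr i in [:: a; b; c; d].

Definition rot (x : W) : seq W :=
 match x with
 | inl t => if t == c0 then [:: v c1; v pz; B; v c3; v py]
   else if t == c1 then [:: v c2; A; v pz; v c0; v py]
   else if t == c2 then [:: v py; v c3; v px; A; v c1]
   else if t == c3 then [:: v c2; v py; v c0; B; v px]
   else if t == px then [:: A; v c2; v c3; B]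
   else if t == py then [:: v c2; v c1; v c0; v c3]
   else [:: A; B; v c0; v c1]
 | inr i => if val i == 0 then [:: v c2; v px; v pz; v c1] else [:: v px; v c3; v c0; v pz]
 end.

Definition plan' (x y : W) : bool :=
  match x, y with
  | inl u, inl w => e u w && ~~ has (fun i => crossed_at cr i u w) enumI
  | inl u, inr i => u \in cr_list i
  | inr i, inl u => u \in cr_list i
  | inr _, inr _ => false
  end.

Lemma cr_vertsE i u : (u \in cr_verts cr i) = (u \in cr_list i).
Proof. by rewrite /cr_verts /cr_list; case: (cr i) => [[a b] [c d]]; rewrite !inE -!orbA. Qed.

Lemma existsE u w : [exists i, crossed_at cr i u w] = has (fun i => crossed_at cr i u w) enumI.
Proof.
apply/existsP/hasP => [[i Hi]|[i _ Hi]]; last by exists i.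
by exists i => //; apply: memI.
Qed.

Lemma plan_eq1 x y : planarization e cr x y = plan' x y.
Proof. by case: x => [u|i]; case: y => [w|j] //=; rewrite ?existsE ?cr_vertsE. Qed.

Lemma chk_rot : all (fun x => all (fun y => plan' x y == (y \in rot x)) enumW) enumW.
Proof. by vm_compute. Qed.

Lemma plan_eq x y : planarization e cr x y = (y \in rot x).
Proof.
rewrite plan_eq1; apply/eqP.
by move/allP: chk_rot => /(_ x (memW x)) /allP /(_ y (memW y)).
Qed.

Definition sf (d : W * W) : W * W := (d.1, next (rot d.1) d.2).

Lemma chk_inj : all (fun d1 => all (fun d2 => (sf d1 == sf d2) ==> (d1 == d2)) enumWW) enumWW.
Proof. by vm_compute. Qed.

Lemma sf_inj : injective sf.
Proof.
move=> d1 d2 E; apply/eqP.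
move/allP: chk_inj => /(_ d1 (memWW d1)) /allP /(_ d2 (memWW d2)).
by rewrite E eqxx.
Qed.

Definition s : {perm (W * W)} := perm sf_inj.
Local Notation h := (planarization e cr).

Lemma iter_s n x y : iter n s (x, y) = (x, iter n (next (rot x)) y).
Proof. by elim: n => //= n ->; rewrite permE. Qed.

Lemma chk_orb : all (fun x => all (fun y => all (fun z =>
   (y \in rot x) ==> (z \in rot x) ==> has (fun n => iter n (next (rot x)) y == z) (iota 0 5))
   enumW) enumW) enumW.
Proof. by vm_compute. Qed.

Lemma rotsys : rotation_system h s.
Proof.
split.
- case=> x y; rewrite /dart plan_eq /= => ny.
  by rewrite permE /sf /= next_nth (negbTE ny).
- by case=> x y _; rewrite permE.
- move=> x y z; rewrite !plan_eq => hy hz.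
  move/allP: chk_orb => /(_ x (memW x)) /allP /(_ y (memW y)) /allP /(_ z (memW z)).
  rewrite hy hz !implyTb => /hasP[n _ /eqP En].
  by apply/porbitP; exists n; rewrite permX iter_s En.
Qed.

Lemma I2cases (i : 'I_2) : i = i0 \/ i = i1.
Proof. by case: i => [[|[|n]] Hi] //; [left|right]; apply: val_inj. Qed.

Lemma valid : valid_crossings e cr.
Proof.
split; first by case=> [[|[|n]] Hi].
have chk : all (fun u => all (fun w => ~~ (crossed_at cr i0 u w && crossed_at cr i1 u w)) enumT) enumT.
  by vm_compute.
move=> i j u w _ Hi Hj.
move/allP: chk => /(_ u (memT u)) /allP /(_ w (memT w)).
case: (I2cases i) Hi => ->; case: (I2cases j) Hj => -> //; move=> H1 H2.
- by rewrite H1 H2.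
- by rewrite H1 H2.
Qed.

Definition phif (d : W * W) : W * W := sf (d.2, d.1).
Local Notation phi := (face_perm s).

Lemma phiE' d : phi d = phif d.
Proof. by rewrite /face_perm permM /swap_perm !permE. Qed.

Lemma iter_phi n d : iter n phi d = iter n phif d.
Proof. by elim: n => //= n ->; rewrite phiE'. Qed.

Lemma chk12 : all (fun d => (d.2 \in rot d.1) ==> (iter 12 phif d == d)) enumWW.
Proof. by vm_compute. Qed.

Lemma dartE d : dart h d = (d.2 \in rot d.1).
Proof. by rewrite /dart plan_eq. Qed.

Lemma iter12 d : dart h d -> iter 12 phif d = d.
Proof.
rewrite dartE => hd; move/allP: chk12 => /(_ d (memWW d)).
by rewrite hd => /eqP.
Qed.

Lemma iter_mod d n : dart h d -> iter n phif d = iter (n %% 12) phif d.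
Proof.
move=> hd; rewrite {1}(divn_eq n 12) addnC iterD; congr (iter _ _ _).
elim: (n %/ 12) => // q IH; by rewrite mulSn iterD IH iter12.
Qed.

Lemma porbit_traj d : dart h d -> porbit phi d =i traject phif d 12.
Proof.
move=> hd y; apply/porbitP/trajectP => [[n ->]|[n lt ->]].
  exists (n %% 12); first by rewrite ltn_mod.
  by rewrite permX iter_phi iter_mod.
by exists n; rewrite permX iter_phi.
Qed.

Definition reps : seq (W * W) :=
  [seq d <- enumWW | (d.2 \in rot d.1) &&
     all (fun n => index d enumWW <= index (iter n phif d) enumWW) (iota 0 12)].

Lemma chk_reps : [&& size reps == 13, uniq enumWW,
  all (fun d => (d.2 \in rot d.1) ==> has (fun r => d \in traject phif r 12) reps) enumWW &
  all (fun r1 => all (fun r2 => (r1 \in traject phif r2 12) ==> (r1 == r2)) reps) reps].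
Proof. by vm_compute. Qed.

Lemma nfaces_eq : nfaces h s = 13.
Proof.
case/and4P: chk_reps => /eqP sz uWW cov dis.
have rdart r : r \in reps -> dart h r by rewrite mem_filter dartE => /andP[/andP[]].
rewrite /nfaces.
have -> : [set porbit phi d | d in [pred d | dart h d]] = [set porbit phi r | r in reps].
  apply/setP => X; apply/imsetP/imsetP => [[d hd ->]|[r hr ->]]; last first.
    exists r; [rewrite inE; exact: rdart | reflexivity].
  move: hd; rewrite inE => hd.
  move/allP: cov => /(_ d (memWW d)); rewrite -dartE hd => /hasP[r hr dr].
  exists r; first exact: hr.
  apply/eqP; rewrite eq_porbit_mem porbit_traj; [exact: dr | exact: rdart].
rewrite /nfaces.
rewrite card_in_imset; first by rewrite (card_uniqP _) ?sz // filter_uniq.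
move=> r1 r2 h1 h2 E.
have : r1 \in porbit phi r2 by rewrite -E porbit_id.
rewrite porbit_traj; last exact: rdart.
move=> H.
by move/allP: dis => /(_ r1 h1) /allP /(_ r2 h2); rewrite H => /eqP.
Qed.

Lemma ndarts_eq : ndarts h = 40.
Proof.
have uWW : uniq enumWW by vm_compute.
rewrite /ndarts (card_count _ uWW memWW).
rewrite (eq_count (a2 := fun d => d.2 \in rot d.1)); last by move=> d; rewrite dartE.
by vm_compute.
Qed.

Definition hub : W := v c0.

Lemma chk_conn : all (fun x =>
  [|| x == hub, x \in rot hub | has (fun z => (z \in rot hub) && (x \in rot z)) enumW] &&
  [|| x == hub, hub \in rot x | has (fun z => (z \in rot x) && (hub \in rot z)) enumW]) enumW.
Proof. by vm_compute. Qed.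

Lemma conn x y : connect h x y.
Proof.
move/allP: chk_conn => H.
have [H1 H2] : connect h hub y /\ connect h x hub.
  move: (H y (memW y)) (H x (memW x)) => /andP[Hy _] /andP[_ Hx]; split.
    case/or3P: Hy => [/eqP->|hy|/hasP[z _ /andP[hz zy]]]; first exact: connect0.
      by apply: connect1; rewrite plan_eq.
    by apply: (connect_trans (y := z)); apply: connect1; rewrite plan_eq.
  case/or3P: Hx => [/eqP->|hx|/hasP[z _ /andP[hz zy]]]; first exact: connect0.
    by apply: connect1; rewrite plan_eq.
  by apply: (connect_trans (y := z)); apply: connect1; rewrite plan_eq.
exact: connect_trans H2 H1.
Qed.

Lemma comps_eq : ncomps h = 1 /\ nedge_comps h = 1.
Proof.
have E x : [set y | connect h x y] = setT by apply/setP => y; rewrite !inE conn.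
split.
  rewrite /ncomps (_ : [set _ | x : W] = [set setT]) ?cards1 //.
  apply/setP => Z; apply/imsetP/set1P => [[x _ ->]|->]; first exact: E.
  by exists hub; [|rewrite E].
rewrite /nedge_comps (_ : [set _ | x in _] = [set setT]) ?cards1 //.
apply/setP => Z; apply/imsetP/set1P => [[x _ ->]|->]; first exact: E.
exists hub; last by rewrite E.
rewrite inE; apply/existsP; exists (v c1); rewrite plan_eq; by vm_compute.
Qed.

Lemma cardW : #|{: W}| = 9.
Proof. by rewrite !card_sum !card_ord. Qed.

Lemma plane : plane_rotation h s.
Proof.
split; first exact: rotsys.
case: comps_eq => -> ->; by rewrite cardW nfaces_eq ndarts_eq.
Qed.

Lemma rot_cross i : let: ((a, b), (c, d)) := cr i in
        [/\ s (inr i, inl a) = (inr i, inl c),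
            s (inr i, inl c) = (inr i, inl b),
            s (inr i, inl b) = (inr i, inl d)
          & s (inr i, inl d) = (inr i, inl a)].
Proof.
case: (I2cases i) => ->; rewrite /= !permE; split; vm_compute; reflexivity.
Qed.

Lemma drawing : one_planar_drawing e cr s.
Proof. split; [exact: valid | exact: plane | exact: rot_cross]. Qed.

Lemma chk_common : all (fun u => ((u \in cr_list i0) && (u \in cr_list i1)) ==> (u == px) || (u == pz)) enumT.
Proof. by vm_compute. Qed.

Lemma bound2 (i j : 'I_2) : i != j -> #|false_nbhd e cr i :&: false_nbhd e cr j| <= 2.
Proof.
have key : false_nbhd e cr i0 :&: false_nbhd e cr i1 \subset [set v px; v pz].
  apply/subsetP => y; rewrite !inE !plan_eq1; case: y => [u|k] //= /andP[h0 h1].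
  move/allP: chk_common => /(_ u (memT u)); rewrite h0 h1 /= => /orP[] /eqP->.
    by rewrite eqxx.
  by rewrite eqxx orbT.
have le2 : #|[set v px; v pz]| <= 2 by rewrite cards2.
case: (I2cases i) => ->; case: (I2cases j) => -> //; rewrite ?eqxx // => _.
  exact: leq_trans (subset_leq_card key) le2.
by rewrite setIC; exact: leq_trans (subset_leq_card key) le2.
Qed.

Lemma has2 : has_drawing_bound e 2.
Proof. exists 2, cr, s; split; [exact: drawing | exact: bound2]. Qed.

Lemma uT : uniq enumT.
Proof. by vm_compute. Qed.

Lemma degE u : #|[set w | e u w]| = count (e u) enumT.
Proof.
rewrite -(card_count _ uT memT); apply: eq_card => w; by rewrite !inE.
Qed.

Lemma esym' : forall u w, e u w = e w u.
Proof.
have chk : all (fun u => all (fun w => e u w == e w u) enumT) enumT by vm_compute.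
move=> u w; apply/eqP; by move/allP: chk => /(_ u (memT u)) /allP /(_ w (memT w)).
Qed.

Lemma eirr' : forall u, e u u = false.
Proof.
have chk : all (fun u => ~~ e u u) enumT by vm_compute.
move=> u; apply/negbTE; by move/allP: chk => /(_ u (memT u)).
Qed.

Lemma noK4' : forall a b c d, e a b -> e c d -> e c a -> e b c -> e d b -> e a d -> False.
Proof.
have chk : all (fun a => all (fun b => all (fun c => all (fun d =>
  ~~ [&& e a b, e c d, e c a, e b c, e d b & e a d]) enumT) enumT) enumT) enumT by vm_compute.
move=> a b c d H1 H2 H3 H4 H5 H6.
move/allP: chk => /(_ a (memT a)) /allP /(_ b (memT b)) /allP /(_ c (memT c)) /allP /(_ d (memT d)).
by rewrite H1 H2 H3 H4 H5 H6.
Qed.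

Lemma deg2' : forall u, 2 <= #|[set w | e u w]|.
Proof.
have chk : all (fun u => 2 <= count (e u) enumT) enumT by vm_compute.
move=> u; rewrite degE; by move/allP: chk => /(_ u (memT u)).
Qed.

Lemma sum32 : \sum_u #|[set w | e u w]| = 32.
Proof.
rewrite (eq_bigr (fun u => count (e u) enumT)); last by move=> u _; rewrite degE.
rewrite big_sumType !big_ord_recr !big_ord0 /=.
by vm_compute.
Qed.

Lemma cardT : #|{: T}| = 7.
Proof. by rewrite card_sum !card_ord. Qed.

Lemma no_bound1 : ~ has_drawing_bound e 1.
Proof.
case=> k [cr' [s' [Hd Hb]]].
have := @Low.main_ineq T e k cr' s' esym' eirr' noK4' deg2' Hd Hb c0.
rewrite sum32 cardT; lia.
Qed.

Theorem lemma13 : class_C2 (join_rel (cycle_rel 4) (edgeless_rel 3)).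
Proof.
have nb1 := no_bound1.
have nc0 : ~ class_C0 e.
  case=> k [cr' [s' [Hd Hb]]]; apply: nb1; exists k, cr', s'; split => // i j nij.
  exact: leq_trans (Hb i j nij) _.
split; first exact: nc0.
split; first by case=> _ H; apply: nb1.
exact: has2.
Qed.
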